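(* For every $n\ge1$, no locally valid MV assignment of $M_{2,n}$ has exactly $2n-1$ flippable faces; equivalently, no vertex of ${\rm OFG}(M_{2,n})$ has degree $2n-1$.
   Context: The $2\times n$ Miura-ori $M_{2,n}$ ($n\ge1$) has faces $\alpha_{i,j}$ ($i\in\{1,2\}$, $j\in\{1,\dots,n\}$), interior vertices $x_1,\dots,x_{n-1}$, and creases $e_0$ and $e_{3k-1},e_{3k},e_{3k+1}$ ($k=1,\dots,n-1$). At $x_k$ the creases are left $e_{3k-3}$, top $e_{3k-1}$, right $e_{3k}$, bottom $e_{3k+1}$. Face $\alpha_{1,j}$ is bordered by those of $e_{3j-4}$ (iff $j\ge2$), $e_{3j-3}$, $e_{3j-1}$ (iff $j\le n-1$); $\alpha_{2,j}$ by those of $e_{3j-2}$ (iff $j\ge2$), $e_{3j-3}$, $e_{3j+1}$ (iff $j\le n-1$). An MV assignment $\mu$ maps creases to $\{1,-1\}$; it is locally valid if for each $k$ exactly one of $\mu(e_{3k-1}),\mu(e_{3k}),\mu(e_{3k+1})$ differs from $\mu(e_{3k-3})$. The face flip $\mu_\alpha$ negates $\mu$ on the creases bordering $\alpha$; $\alpha$ is flippable under $\mu$ if $\mu,\mu_\alpha$ are both locally valid. ${\rm OFG}(M_{2,n})$ has the locally valid assignments as vertices, with $\mu\sim\mu_\alpha$ for each flippable $\alpha$; the degree of $\mu$ is its number of flippable faces. *)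

(* Defs.v *)
From mathcomp Require Import all_boot.
Unset Implicit Arguments. Unset Printing Implicit Defensive.

(* Creases are named by natural numbers:
   e_0 and e_{3k-1}, e_{3k}, e_{3k+1} for k = 1..n-1.
   An MV assignment is a function mu : nat -> bool on crease indices
   (true = mountain = 1, false = valley = -1); only its values on the
   creases of M_{2,n} matter. *)

Definition mv := nat -> bool.

(* local validity at interior vertex x_k (1 <= k <= n-1): exactly one of
   mu(top), mu(right), mu(bottom) differs from mu(left) *)
Definition valid_at (mu : mv) (k : nat) : bool :=
  let l := mu (3 * k - 3) in
  (mu (3 * k - 1) != l) + (mu (3 * k) != l) + (mu (3 * k + 1) != l) == 1.

Definition locally_valid (n : nat) (mu : mv) : bool :=
  [forall k : 'I_n, (0 < k) ==> valid_at mu k].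

(* Faces alpha_{i,j}, i in {1,2}, j in {1..n}, encoded as (b, j') with
   b = false for i = 1, b = true for i = 2, and j' : 'I_n, j = j'+1. *)
Definition face (n : nat) := (bool * 'I_n)%type.

Definition borders (n : nat) (a : face n) (c : nat) : bool :=
  let j := (a.2 : nat).+1 in
  if ~~ a.1 then
    ((2 <= j) && (c == 3 * j - 4)) || (c == 3 * j - 3) ||
    ((j <= n - 1) && (c == 3 * j - 1))
  else
    ((2 <= j) && (c == 3 * j - 2)) || (c == 3 * j - 3) ||
    ((j <= n - 1) && (c == 3 * j + 1)).

Definition flip (n : nat) (mu : mv) (a : face n) : mv :=
  fun c => if borders n a c then ~~ mu c else mu c.

Definition flippable (n : nat) (mu : mv) (a : face n) : bool :=
  locally_valid n mu && locally_valid n (flip n mu a).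

Definition degree (n : nat) (mu : mv) : nat :=
  #|[pred a : face n | flippable n mu a]|.

(* Main.v *)
Require Import Defs.
From mathcomp Require Import all_boot zify.

Definition atk (k c : nat) := [\/ c = 3 * k - 3, c = 3 * k - 1, c = 3 * k | c = 3 * k + 1].

Ltac dec_atoms :=
  repeat match goal with
  | |- context [?m == ?p :> nat] =>
      first [ rewrite (_ : (m == p) = true); last by (apply/eqP; lia)
            | rewrite (_ : (m == p) = false); last by (apply/eqP; lia) ]
  | |- context [?m <= ?p] =>
      first [ rewrite (_ : (m <= p) = true); last by (apply/idP; lia)
            | rewrite (_ : (m <= p) = false); last by (apply/negbTE/negP; lia) ]
  end.

Lemma valid_ext (mu nu : mv) k (e : bool) :
  (forall c, atk k c -> nu c = mu c (+) e) -> valid_at nu k = valid_at mu k.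
Proof.
move=> H; rewrite /valid_at (H (3 * k - 3)) ?(H (3 * k - 1)) ?(H (3 * k)) ?(H (3 * k + 1)).
- clear H; move: e (mu (3 * k - 3)) (mu (3 * k - 1)) (mu (3 * k)) (mu (3 * k + 1)).
  by do 5! case.
all: rewrite /atk; by [constructor 1 | constructor 2 | constructor 3 | constructor 4].
Qed.

Lemma flipE n mu (a : face n) c : flip n mu a c = mu c (+) borders n a c.
Proof. by rewrite /flip; case: (borders n a c); case: (mu c). Qed.

Lemma far n (a : face n) k c : 1 <= k <= n - 1 -> (a.2 : nat) <> k - 1 -> (a.2 : nat) <> k ->
  atk k c -> borders n a c = false.
Proof. move=> hk h1 h2; rewrite /atk /borders => -[]->; case: (a.1) => /=; dec_atoms; rewrite /= ?andbF ?orbF //. Qed.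

Lemma partner n (a a' : face n) k c : 1 <= k <= n - 1 -> a'.1 = ~~ a.1 ->
  ((a.2 : nat) = k - 1 /\ (a'.2 : nat) = k \/ (a.2 : nat) = k /\ (a'.2 : nat) = k - 1) ->
  atk k c -> borders n a' c = ~~ borders n a c.
Proof.
move=> hk e h; rewrite /atk /borders e.
case: h => -[-> ->] -[]->; case: (a.1) => /=; dec_atoms; rewrite /= ?andbF ?orbF ?andbT ?orbT //.
Qed.

Lemma nonflip_partner n mu (a : face n) : locally_valid n mu -> ~~ flippable n mu a ->
  exists a', (a' != a) && ~~ flippable n mu a'.
Proof.
move=> hv; rewrite /flippable hv /= => /forallPn [k]; rewrite negb_imply => /andP[k0 hk].
have kn : 1 <= k <= n - 1 by have := ltn_ord k; lia.
have [[ha|ha]|hfar] : ((a.2 : nat) = k - 1 \/ (a.2 : nat) = k) \/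
   ((a.2 : nat) <> k - 1 /\ (a.2 : nat) <> k) by lia.
- exists (~~ a.1, k); apply/andP; split.
    by apply/negP => /eqP/(f_equal fst) /=; case: (a.1).
  apply/forallPn; exists k; rewrite k0 /=.
  rewrite (@valid_ext (flip n mu a) _ _ true) //.
  move=> c hc; rewrite !flipE (@partner n a (~~ a.1, _) k c kn erefl _ hc); last by left.
  by case: (mu c); case: (borders n a c).
- have k1 : k - 1 < n by have := ltn_ord k; lia.
  exists (~~ a.1, Ordinal k1); apply/andP; split.
    by apply/negP => /eqP/(f_equal fst) /=; case: (a.1).
  apply/forallPn; exists k; rewrite k0 /=.
  rewrite (@valid_ext (flip n mu a) _ _ true) //.
  move=> c hc; rewrite !flipE (@partner n a (~~ a.1, _) k c kn erefl _ hc); last by right.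
  by case: (mu c); case: (borders n a c).
- move: hk; rewrite (@valid_ext mu _ _ false); last first.
    by move=> c hc; rewrite flipE (@far n a k c kn) //; case: hfar.
  by move: hv => /forallP /(_ k); rewrite k0 /= => ->.
Qed.

Theorem lemma4p8 (n : nat) (mu : mv) :
  1 <= n -> locally_valid n mu -> degree n mu != (2 * n).-1.
Proof.
move=> n1 hv; apply/eqP => hd.
have hc := cardC [pred a : face n | flippable n mu a].
rewrite -/(degree n mu) hd card_prod card_bool card_ord in hc.
move: hc; set m := (X in _ + X = _) => hc.
have : 0 < m by lia.
rewrite /m; move/card_gt0P => [a0]; rewrite !inE => na0.
have [a1 /andP[ne na1]] := nonflip_partner n mu a0 hv na0.
have : 2 <= m.
  apply: leq_trans (_ : #|[set a1; a0]| <= m); first by rewrite cards2 ne.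
  apply: subset_leq_card; apply/subsetP => x.
  by rewrite !inE => /orP[]/eqP->.
lia.
Qed.
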